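(* Let $k\ge 2$ and let $G$ be a $k$-connected graph. Let $H\subset G$ be a minimum spanning $k$-connected subgraph of $G$. Then \[ mc_k(G)\ge e(G)-e(H)+h_k(G)\ge e(G)-e(H)+1. \]
   Context: All graphs are finite, simple and undirected. A graph is $k$-connected if it has at least $k+1$ vertices and remains connected after deleting any at most $k-1$ vertices. Paths are called disjoint if they are internally vertex-disjoint. An edge-coloured path is monochromatic if all its edges have the same colour. For a $k$-connected graph $G$, an edge-colouring is monochromatic $k$-connected if any two vertices are connected by $k$ disjoint monochromatic paths; $mc_k(G)$ is the maximum number of colours in a monochromatic $k$-connected colouring of $G$. A minimum spanning $k$-connected subgraph of $G$ is a $k$-connected subgraph $H$ with $V(H)=V(G)$ and $e(H)$ minimum among such subgraphs. $h_k(G)=\max\{mc_k(H): H \text{ is a minimum spanning } k\text{-connected subgraph of } G\}$. *)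

(* Defs.v *)
From mathcomp Require Import all_boot.
From mathcomp Require Import boolp.
Set Implicit Arguments. Unset Strict Implicit. Unset Printing Implicit Defensive.

Definition simple_graph (T : finType) (E : {set {set T}}) : Prop :=
  forall e, e \in E -> #|e| = 2.

Definition adj (T : finType) (E : {set {set T}}) : rel T :=
  fun x y => [set x; y] \in E.

Definition nedges (T : finType) (E : {set {set T}}) : nat := #|E|.

Definition kconnected (T : finType) (k : nat) (E : {set {set T}}) : Prop :=
  k.+1 <= #|T| /\
  forall S : {set T}, #|S| <= k.-1 ->
    forall x y, x \notin S -> y \notin S ->
      connect (fun u v => [&& adj E u v, u \notin S & v \notin S]) x y.

(* p is (the vertex sequence after x of) a path from x to y in E *)
Definition is_path (T : finType) (E : {set {set T}}) (x y : T) (p : seq T) : Prop :=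
  [/\ path (adj E) x p, last x p = y & uniq (x :: p)].

Definition internal (T : finType) (x : T) (p : seq T) : seq T :=
  belast x p.

Definition monochromatic (T : finType) (c : {set T} -> nat) (x : T) (p : seq T) : Prop :=
  exists col : nat, path (fun u v => c [set u; v] == col) x p.

Definition k_mono_paths (T : finType) (k : nat) (E : {set {set T}})
    (c : {set T} -> nat) (x y : T) : Prop :=
  exists ps : seq (seq T),
    [/\ size ps = k, uniq ps,
        forall p, p \in ps -> is_path E x y p /\ monochromatic c x p &
        forall i j, i < j < size ps ->
          [disjoint behead (internal x (nth [::] ps i))
                  & behead (internal x (nth [::] ps j))]].

Definition mono_kconn_colouring (T : finType) (k : nat) (E : {set {set T}})
    (c : {set T} -> nat) : Prop :=
  forall x y : T, x != y -> k_mono_paths k E c x y.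

Definition ncolours (T : finType) (E : {set {set T}}) (c : {set T} -> nat) : nat :=
  size (undup [seq c e | e <- enum E]).

(* mc_k(G): maximum number of colours of a monochromatic k-connected
   colouring (the number of colours is at most e(G)). *)
Definition mc (T : finType) (k : nat) (E : {set {set T}}) : nat :=
  \max_(n < #|E|.+1 |
        `[< exists c : {set T} -> nat,
              mono_kconn_colouring k E c /\ ncolours E c = n >]) n.

Definition min_spanning_kconn (T : finType) (k : nat) (E F : {set {set T}}) : Prop :=
  [/\ F \subset E, kconnected k F &
      forall F' : {set {set T}}, F' \subset E -> kconnected k F' -> #|F| <= #|F'|].

Definition hk (T : finType) (k : nat) (E : {set {set T}}) : nat :=
  \max_(F : {set {set T}} | `[< min_spanning_kconn k E F >]) mc k F.

(* Main.v *)
Require Import Defs.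
From mathcomp Require Import all_boot.
From mathcomp Require Import boolp.
From mathcomp Require Import zify.
Set Implicit Arguments. Unset Strict Implicit. Unset Printing Implicit Defensive.

Section Basic.
Variable T : finType.
Implicit Types (E F : {set {set T}}) (S Y A B Z : {set T}).

Definition avoid E S : rel T := fun u v => [&& adj E u v, u \notin S & v \notin S].

Lemma adj_sym E : symmetric (adj E).
Proof. by move=> u v; rewrite /adj setUC. Qed.

Lemma avoid_sym E S : symmetric (avoid E S).
Proof. by move=> u v; rewrite /avoid adj_sym; case: (u \in S); case: (v \in S); rewrite ?andbF. Qed.

Lemma cavoid_sym E S u v : connect (avoid E S) u v = connect (avoid E S) v u.
Proof. by apply: sym_connect_sym; apply: avoid_sym. Qed.

Lemma cavoid_in E S u v : connect (avoid E S) u v -> u \in S -> u = v.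
Proof.
case/connectP=> [[|w p]] /=; first by move=> _ ->.
by case/andP=> /and3P [_ /negPf ->].
Qed.

Lemma cavoid_notin E S u v : connect (avoid E S) u v -> u \notin S -> v \notin S.
Proof.
move=> c uS; apply/negP=> vS.
rewrite cavoid_sym in c; move: uS; by rewrite -(cavoid_in c vS) vS.
Qed.

Lemma cavoid_hit E S Y a v : connect (avoid E S) a v -> ~~ connect (avoid E Y) a v ->
  exists2 z, z \in Y & connect (avoid E S) a z.
Proof.
case/connectP=> p pp ->{v} nc.
case: (boolP (has (mem Y) (a :: p))) => [/hasP [z zp zY]|].
  by exists z => //; apply: (path_connect pp).
rewrite -all_predC => al; case/negP: nc; apply/connectP; exists p => //.
apply: (sub_in_path _ al pp) => u w /= uY wY /and3P [aw _ _].
by rewrite /avoid aw; rewrite !inE in uY wY; rewrite uY wY.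
Qed.

Lemma set2_cases (x y u v : T) : u != v -> [set u; v] = [set x; y] ->
  (u = x /\ v = y) \/ (u = y /\ v = x).
Proof.
move=> uv e.
have hu : u \in [set x; y] by rewrite -e !inE eqxx.
have hv : v \in [set x; y] by rewrite -e !inE eqxx orbT.
move: hu hv uv; rewrite !inE => /orP [] /eqP -> /orP [] /eqP -> uv;
  rewrite ?eqxx in uv => //; tauto.
Qed.

Lemma decomp E S x y u v : simple_graph E -> connect (avoid E S) u v ->
  let R := avoid (E :\ [set x; y]) S in
  connect R u v \/ (connect R u x /\ connect R y v) \/ (connect R u y /\ connect R x v).
Proof.
move=> sE /connectP [p]; elim: p u => [|w p IH] u /=.
  by move=> _ ->; left; apply: connect0.
case/andP=> Ruw pw vl; have /= := IH w pw vl.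
set R := avoid _ S.
have H1 : R u w \/ (u = x /\ w = y) \/ (u = y /\ w = x).
  case/and3P: Ruw => aw uS wS.
  case: (eqVneq [set u; w] [set x; y]) => [e|ne].
    right; apply: set2_cases => //.
    by have := sE _ aw; rewrite cards2; case: (u != w).
  by left; rewrite /R /avoid uS wS /adj in_setD1 ne /= andbT.
have c1 : forall a b, R a b -> connect R a b by move=> a b; apply: connect1.
case: H1 => [Ruw'|[[-> ->]|[-> ->]]]; case=> [c|[[c1' c2]|[c1' c2]]].
- by left; apply: connect_trans (c1 _ _ Ruw') c.
- by right; left; split => //; apply: connect_trans (c1 _ _ Ruw') c1'.
- by right; right; split => //; apply: connect_trans (c1 _ _ Ruw') c1'.
- by right; left; split => //; apply: connect0.
- by right; left; split => //; apply: connect0.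
- by left.
- by right; right; split => //; apply: connect0.
- by left.
- by right; right; split => //; apply: connect0.
Qed.


Definition sep E A B S : bool :=
  ~~ [exists a, exists b, [&& a \in A, b \in B, a \notin S, b \notin S & connect (avoid E S) a b]].

Lemma sep_use E A B S a b : sep E A B S -> a \in A -> b \in B -> a \notin S -> b \notin S ->
  connect (avoid E S) a b -> False.
Proof.
move=> /negP h aA bB aS bS c; apply: h; apply/existsP; exists a; apply/existsP; exists b.
by rewrite aA bB aS bS c.
Qed.

Lemma sep_intro E A B S :
  (forall a b, a \in A -> b \in B -> a \notin S -> b \notin S -> connect (avoid E S) a b -> False) ->
  sep E A B S.
Proof.
move=> h; apply/negP => /existsP [a /existsP [b /and5P [aA bB aS bS c]]].
exact: (h a b).
Qed.

Lemma sep_neg E A B S : ~~ sep E A B S ->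
  exists a b, [/\ a \in A, b \in B, a \notin S, b \notin S & connect (avoid E S) a b].
Proof.
rewrite negbK => /existsP [a /existsP [b /and5P [aA bB aS bS c]]].
by exists a, b.
Qed.

Lemma sep_sym E A B S : sep E A B S = sep E B A S.
Proof.
apply/idP/idP => h; apply: sep_intro => a b aA bB aS bS c;
  apply: (sep_use h bB aA bS aS); by rewrite cavoid_sym.
Qed.

Definition apath E A B (p : seq T) : bool :=
  if p is a :: t then [&& path (adj E) a t, a \in A, last a t \in B & uniq p] else false.

Definition dis (p q : seq T) : bool := [disjoint p & q].

Definition linkage E A B k (ps : seq (seq T)) :=
  [/\ size ps = k, all (apath E A B) ps & pairwise dis ps].

Lemma disP (p q : seq T) : reflect (forall v, v \in p -> v \in q -> False) (dis p q).
Proof.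
rewrite /dis disjoint_has; apply: (iffP hasPn) => h v vp.
  by move/negP: (h v vp).
by apply/negP; apply: h.
Qed.

Lemma pairwise_dis_mem (ps : seq (seq T)) p q : pairwise dis ps -> p \in ps -> q \in ps ->
  p != q -> dis p q.
Proof.
elim: ps => [|r ps IH] //= /andP [/allP al pw].
rewrite !inE => /orP [/eqP ->|pin] /orP [/eqP ->|qin]; rewrite ?eqxx //.
- by move=> _; apply: al.
- by move=> _; rewrite /dis disjoint_sym; apply: al.
- by apply: IH.
Qed.

Lemma linkage_sub E E' A B k ps : E' \subset E -> linkage E' A B k ps -> linkage E A B k ps.
Proof.
move=> sub [sz al pw]; split => //; apply/allP => p /(allP al).
case: p => [|a t] //= /and4P [pt aA lB u]; rewrite aA lB u !andbT.
apply: sub_path pt => u1 v1; rewrite /adj => h; exact: (subsetP sub).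
Qed.

Lemma base_case A B k : (forall S, sep set0 A B S -> k <= #|S|) -> exists ps, linkage set0 A B k ps.
Proof.
move=> hk.
have kle : k <= #|A :&: B|.
  apply: hk; apply: sep_intro => a b aA bB aS bS /connectP [[|w p]] /=.
    by move=> _ /= eab; subst b; move: aS; rewrite inE aA bB.
  by rewrite /avoid /adj inE.
exists [seq [:: v] | v <- take k (enum (A :&: B))]; split.
- by rewrite size_map size_takel // -cardE.
- apply/allP => p /mapP [v /mem_take]; rewrite mem_enum inE => /andP [vA vB] -> /=.
  by rewrite vA vB.
- rewrite pairwise_map.
  have : uniq (take k (enum (A :&: B))) by apply: take_uniq; apply: enum_uniq.
  rewrite uniq_pairwise; apply: sub_pairwise => v w /= vw.
  by rewrite /dis disjoint_cons disjoint_has /= !inE vw.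
Qed.


Lemma trim1 (e : rel T) Z : forall t a, path e a t -> last a t \in Z ->
  exists n, [/\ path e a (take n t), last a (take n t) \in Z & all [pred v | v \notin Z] (belast a (take n t))].
Proof.
elim=> [|b t IH] a /=.
  by move=> _ aZ; exists 0.
case/andP=> ab pt lZ.
case: (boolP (a \in Z)) => aZ; first by exists 0.
have [n [p1 l1 a1]] := IH b pt lZ.
by exists n.+1 => /=; rewrite ab p1 l1 aZ a1.
Qed.

Lemma trim2 (e : rel T) Z : forall t a, path e a t -> (a \in Z) || has (mem Z) t ->
  exists a', exists t', exists n, [/\ path e a' t', a' \in Z, last a' t' = last a t,
     all [pred v | v \notin Z] t' & drop n (a :: t) = a' :: t'].
Proof.
elim=> [|b t IH] a /=.
  by rewrite orbF => _ aZ; exists a, [::], 0.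
case/andP=> ab pt.
case: (boolP ((b \in Z) || has (mem Z) t)) => h.
  move=> _; have [a' [t' [n [p1 a1 l1 al1 d1]]]] := IH b pt h.
  by exists a', t', n.+1.
rewrite orbF => aZ; exists a, (b :: t), 0; split => //=; first by rewrite ab.
move: h; rewrite negb_or => /andP [-> /hasPn h2] /=; apply/allP => v vt; exact: h2.
Qed.

Lemma trim_all (P Q : pred (seq T)) :
  (forall p, P p -> exists2 p', Q p' & {subset p' <= p}) ->
  forall ps, all P ps -> pairwise dis ps ->
  exists ps', [/\ size ps' = size ps, all Q ps', pairwise dis ps' &
     forall q', q' \in ps' -> exists2 q, q \in ps & {subset q' <= q}].
Proof.
move=> hPQ; elim=> [|p ps IH] /=.
  by move=> _ _; exists [::].
case/andP=> Pp aP /andP [/allP dp pw].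
have [ps' [s' a' p' sub']] := IH aP pw.
have [p1 Qp1 sp1] := hPQ p Pp.
exists (p1 :: ps'); split => /=.
- by rewrite s'.
- by rewrite Qp1.
- rewrite p' andbT; apply/allP => q' /sub' [q qin sq].
  have := dp q qin => /disP h; apply/disP => v v1 v2.
  by apply: (h v); [apply: sp1 | apply: sq].
- move=> q'; rewrite inE => /orP [/eqP ->|/sub' [q qin sq]].
    by exists p => //; rewrite inE eqxx.
  by exists q => //; rewrite inE qin orbT.
Qed.


Lemma claim E x y Y A B k a0 b0 : simple_graph E ->
  (forall S, sep E A B S -> k <= #|S|) -> sep (E :\ [set x; y]) A B Y ->
  a0 \in A -> b0 \in B -> a0 \notin Y -> b0 \notin Y ->
  connect (avoid (E :\ [set x; y]) Y) a0 x -> connect (avoid (E :\ [set x; y]) Y) y b0 ->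
  forall S, sep (E :\ [set x; y]) A (x |: Y) S -> k <= #|S|.
Proof.
move=> sE hk sY aA0 bB0 aY0 bY0 cax cyb S hS; apply: hk; apply: sep_intro => a b aA bB aS bS c.
have use : forall z, z \in x |: Y -> connect (avoid (E :\ [set x; y]) S) a z -> False.
  move=> z zX cz; apply: (sep_use hS aA zX aS _ cz); exact: cavoid_notin cz aS.
case: (boolP (a \in Y)) => aY.
  by apply: (use a); [rewrite inE aY orbT | apply: connect0].
have := decomp x y sE c; rewrite /= => -[c1|[[c1 c2]|[c1 c2]]].
- case: (boolP (b \in Y)) => bY.
    by apply: (use b) => //; rewrite inE bY orbT.
  have nc : ~~ connect (avoid (E :\ [set x; y]) Y) a b.
    by apply/negP => cc; apply: (sep_use sY aA bB aY bY cc).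
  have [z zY cz] := cavoid_hit c1 nc.
  by apply: (use z) => //; rewrite inE zY orbT.
- by apply: (use x) => //; apply: setU11.
- have nc : ~~ connect (avoid (E :\ [set x; y]) Y) a y.
    by apply/negP => cc; apply: (sep_use sY aA bB0 aY bY0); apply: connect_trans cc cyb.
  have [z zY cz] := cavoid_hit c1 nc.
  by apply: (use z) => //; rewrite inE zY orbT.
Qed.


Lemma menger_step E A B k x y Y a0 b0 :
  (forall E', #|E'| < #|E| -> simple_graph E' -> forall A B k,
      (forall S, sep E' A B S -> k <= #|S|) -> exists ps, linkage E' A B k ps) ->
  simple_graph E -> [set x; y] \in E -> x != y ->
  (forall S, sep E A B S -> k <= #|S|) -> sep (E :\ [set x; y]) A B Y -> #|Y| < k ->
  a0 \in A -> b0 \in B -> a0 \notin Y -> b0 \notin Y -> x \notin Y -> y \notin Y ->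
  connect (avoid (E :\ [set x; y]) Y) a0 x -> connect (avoid (E :\ [set x; y]) Y) y b0 ->
  exists ps, linkage E A B k ps.
Proof.
move=> IH sE eE xy hk sY Yk aA0 bB0 aY0 bY0 xY yY cax cyb.
have h1 := claim sE hk sY aA0 bB0 aY0 bY0 cax cyb.
have h2 : forall S, sep (E :\ [set x; y]) (y |: Y) B S -> k <= #|S|.
  move=> S hS; rewrite sep_sym (setUC [set x] [set y]) in hS.
  rewrite (setUC [set x] [set y]) in sY cax cyb.
  refine (claim (x:=y) (y:=x) (A:=B) (B:=A) (a0:=b0) (b0:=a0) sE _ _ bB0 aA0 bY0 aY0 _ _ hS).
  - by move=> S'; rewrite sep_sym; apply: hk.
  - by rewrite sep_sym.
  - by rewrite cavoid_sym.
  - by rewrite cavoid_sym.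
move: h1 h2 sY cax cyb.
set E' := E :\ [set x; y]; set X1 := x |: Y; set X2 := y |: Y => h1 h2 sY cax cyb.
have sE' : simple_graph E' by move=> f; rewrite in_setD1 => /andP [_ /sE].
have ltE : #|E'| < #|E| by rewrite (cardsD1 [set x; y] E) eE.
have subE : E' \subset E by apply: subD1set.
have adjE : forall u v, adj E' u v -> adj E u v by move=> u v; rewrite /adj => h; apply: (subsetP subE).
have YX1 : {subset Y <= X1} by move=> v vY; rewrite inE vY orbT.
have YX2 : {subset Y <= X2} by move=> v vY; rewrite inE vY orbT.
have [ps1 [s1 a1 p1]] := IH E' ltE sE' A X1 k h1.
have [ps2 [s2 a2 p2]] := IH E' ltE sE' X2 B k h2.
pose Q1 (p : seq T) := if p is a :: t then [&& path (adj E') a t, a \in A, last a t \in X1, uniq p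
   & all [pred v | v \notin X1] (belast a t)] else false.
pose Q2 (p : seq T) := if p is a :: t then [&& path (adj E') a t, a \in X2, last a t \in B, uniq p
   & all [pred v | v \notin X2] t] else false.
have [ps1' [s1' a1' p1' _]] : exists ps', [/\ size ps' = size ps1, all Q1 ps', pairwise dis ps' &
     forall q', q' \in ps' -> exists2 q, q \in ps1 & {subset q' <= q}].
  refine (@trim_all _ Q1 _ ps1 a1 p1) => -[|a t] //= /and4P [pt aA lX u].
  have [n [pt' l' al']] := trim1 pt lX.
  exists (a :: take n t).
    rewrite /= pt' aA l' al' andbT /=.
    by have := take_uniq n.+1 (u : uniq (a :: t)).
  by move=> v; rewrite !inE => /orP [->|/mem_take ->]; rewrite ?orbT.
have [ps2' [s2' a2' p2' _]] : exists ps', [/\ size ps' = size ps2, all Q2 ps', pairwise dis ps' &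
     forall q', q' \in ps' -> exists2 q, q \in ps2 & {subset q' <= q}].
  refine (@trim_all _ Q2 _ ps2 a2 p2) => -[|a t] //= /and4P [pt aX lB u].
  have aX2 : (a \in X2) || has (mem X2) t by rewrite aX.
  have [a' [t' [n [pt' aX' l' al' d']]]] := trim2 pt aX2.
  exists (a' :: t').
    rewrite /= pt' aX' l' lB al' andbT; have := drop_uniq n (u : uniq (a :: t)); by rewrite d'.
  by move=> v; rewrite -d' => /mem_drop.

have allQ2 : forall q, q \in ps2' -> Q2 q by move=> q qin; exact: (allP a2').
have hd_in : forall q, q \in ps2' -> head x q \in q.
  by move=> [|h0 s0] qin; [have := allQ2 _ qin | rewrite inE eqxx].
have cover : forall u, u \in X2 -> has (fun q => head x q == u) ps2'.
  move=> u uX.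
  have uh : uniq (map (head x) ps2').
    rewrite uniq_pairwise pairwise_map.
    apply: (sub_in_pairwise (P := mem ps2') _ _ p2'); last by apply/allP.
    move=> q q' qin q'in /disP h /=; apply/negP => /eqP e.
    apply: (h (head x q)); first exact: hd_in.
    by rewrite e; apply: hd_in.
  have hX : {subset map (head x) ps2' <= X2}.
    move=> v /mapP [q qin ->]; case: q qin => [|h0 s0] qin; have := allQ2 _ qin => //=.
    by case/and5P.
  have szh : size (map (head x) ps2') = k by rewrite size_map s2' s2.
  have cX2 : #|X2| <= k by rewrite cardsU1 yY add1n.
  have sub : map (head x) ps2' \subset X2 by apply/subsetP.
  have eqc : #|map (head x) ps2'| = #|X2|.
    apply/eqP; rewrite eqn_leq subset_leq_card //.
    by move/card_uniqP: uh => ->; rewrite szh.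
  have ei := elimT (subset_cardP eqc) sub.
  have : u \in map (head x) ps2' by rewrite ei.
  case/mapP=> q qin e; apply/hasP; exists q => //; by rewrite e.
pose qsel u := nth [::] ps2' (find (fun q => head x q == u) ps2').
have qselP : forall u, u \in X2 -> qsel u \in ps2' /\ head x (qsel u) = u.
  move=> u uX; have h := cover u uX; split.
    by apply: mem_nth; rewrite -has_find.
  by apply/eqP; apply: (nth_find _ h).
have qselD : forall u, u \in X2 -> exists s, [/\ qsel u = u :: s, path (adj E') u s,
     last u s \in B, uniq (u :: s) & all [pred v | v \notin X2] s].
  move=> u uX; have [qin hq] := qselP u uX; have Qq := allQ2 _ qin.
  move: qin hq Qq; case E0: (qsel u) => [|h s] //= qin hq; subst h.
  by case/and5P=> pt hX lB un al; exists s.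
pose sig u := if u == x then y else u.
pose Q u := if u == x then qsel y else behead (qsel u).
pose R := avoid E' Y.
have notY2 : forall w, w \notin X2 -> w \notin Y.
  by move=> w /negP nX; apply/negP => wY; apply: nX; exact: YX2.
have notY1 : forall w, w \notin X1 -> w \notin Y.
  by move=> w /negP nX; apply/negP => wY; apply: nX; exact: YX1.
have F4 : forall a b v, a \in A -> a \notin Y -> b \in B -> b \notin Y ->
    connect R a v -> connect R v b -> False.
  move=> a b v aA aY bB bY c1 c2; apply: (sep_use sY aA bB aY bY).
  exact: connect_trans c1 c2.
have CBs : forall h s v, path (adj E') h s -> all [pred w | w \notin X2] s -> last h s \in B ->
    v \in s -> exists2 b, (b \in B) && (b \notin Y) & connect R v b.
  move=> h [|s3 s'] v // pt al lB vin; case/andP: pt => _ ps.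
  have al' : all [pred w | w \notin Y] (s3 :: s').
    by apply/allP => w win; apply: notY2; exact: (allP al).
  have pR : path R s3 s'.
    apply: (sub_in_path _ al' ps) => w1 w2; rewrite !inE => n1 n2 a12.
    by rewrite /R /avoid a12 n1 n2.
  exists (last s3 s').
    by rewrite lB; exact: (allP al' _ (mem_last s3 s')).
  apply: (@connect_trans _ _ s3).
    by rewrite cavoid_sym; exact: (path_connect pR vin).
  exact: (path_connect pR (mem_last s3 s')).
have X1E : forall u, u \in X1 -> u != x -> u \in Y.
  by move=> u uX ne; move: uX; rewrite /X1 in_setU1 (negPf ne).
have CBQ : forall u v, u \in X1 -> v \in Q u -> exists2 b, (b \in B) && (b \notin Y) & connect R v b.
  move=> u v uX; rewrite /Q; case: eqP => [_|/eqP ne].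
    have [s [qe ps lB _ al]] := qselD y (setU11 y Y).
    rewrite qe inE => /orP [/eqP ->|vs].
      by exists b0; [rewrite bB0 bY0 | exact: cyb].
    exact: CBs ps al lB vs.
  have uY := X1E u uX ne.
  have [s [qe ps lB _ al]] := qselD u (YX2 _ uY).
  rewrite qe /= => vs; exact: CBs ps al lB vs.
have CA1 : forall p v, p \in ps1' -> v \in p ->
    (exists2 a, (a \in A) && (a \notin Y) & connect R a v) \/ (v = last x p /\ v \in X1).
  move=> [|a t] v pin //; have := allP a1' _ pin => /= /and5P [pt aA lX un al].
  rewrite lastI mem_rcons inE => /orP [/eqP ->|vb]; first by right.
  left; clear pin; move: pt lX un al vb; case/lastP: t => [|t0 l] pt lX un al vb //.
  rewrite belast_rcons in al vb; rewrite rcons_path in pt; case/andP: pt => pt _.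
  have al' : all [pred w | w \notin Y] (a :: t0).
    by apply/allP => w win; apply: notY1; exact: (allP al).
  have pR : path R a t0.
    apply: (sub_in_path _ al' pt) => w1 w2; rewrite !inE => n1 n2 a12.
    by rewrite /R /avoid a12 n1 n2.
  exists a; first by rewrite aA; exact: (allP al' a (mem_head _ _)).
  exact: (path_connect pR vb).
have Cross : forall p u, p \in ps1' -> u \in X1 -> dis p (Q u).
  move=> p u pin uX; apply/disP => v vp vq.
  have [b /andP [bB bY] cb] := CBQ u v uX vq.
  case: (CA1 p v pin vp) => [[a /andP [aA aY] ca]|[_ vX]].
    exact: F4 aA aY bB bY ca cb.
  case: (eqVneq v x) => [vx|vnx].
    subst v; exact: F4 aA0 aY0 bB bY cax cb.
  have vY := X1E v vX vnx.
  by have e := cavoid_in cb vY; move: bY; rewrite -e vY.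
have Qpath : forall u, u \in X1 -> [/\ path (adj E) u (Q u), last u (Q u) \in B, uniq (Q u)
     & {subset Q u <= qsel (sig u)}].
  move=> u uX; rewrite /Q /sig; case: eqP => [->|/eqP ne].
    have [s [qe ps lB un _]] := qselD y (setU11 y Y).
    rewrite qe /=; split => //.
    by apply/andP; split; [exact: eE | exact: (sub_path adjE ps)].
  have uY := X1E u uX ne.
  have [s [qe ps lB un _]] := qselD u (YX2 _ uY).
  rewrite qe /=; split.
  - exact: (sub_path adjE ps).
  - exact: lB.
  - by case/andP: un.
  - by move=> v vs; rewrite inE vs orbT.
have sigX : forall u, u \in X1 -> sig u \in X2.
  move=> u uX; rewrite /sig; case: eqP => [_|/eqP ne]; first exact: setU11.
  by apply: YX2; apply: X1E.
have siginj : forall u u', u \in X1 -> u' \in X1 -> u != u' -> sig u != sig u'.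
  move=> u u' uX u'X uu'; rewrite /sig.
  case: (eqVneq u x) => [ux|ne]; case: (eqVneq u' x) => [u'x|ne'].
  - by subst; rewrite eqxx in uu'.
  - apply/eqP => e.
    by have := X1E u' u'X ne'; rewrite -e (negPf yY).
  - apply/eqP => e.
    by have := X1E u uX ne; rewrite e (negPf yY).
  - exact: uu'.
have lastX1 : forall p, p \in ps1' -> last x p \in X1 /\ last x p \in p.
  move=> [|a t] pin; have := allP a1' _ pin => //= /and5P [_ _ lX _ _]; split => //.
  exact: mem_last.
exists (map (fun p => p ++ Q (last x p)) ps1'); split.
- by rewrite size_map s1' s1.
- apply/allP => _ /mapP [p pin ->].
  have Qp := allP a1' _ pin; case: p pin Qp => [|a t] pin //= /and5P [pt aA lX un al].
  have [qp ql qu _] := Qpath _ lX.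
  rewrite cat_path (sub_path adjE pt : path (adj E) a t) qp aA last_cat ql /=.
  suff : uniq ((a :: t) ++ Q (last a t)) by [].
  rewrite cat_uniq (un : uniq (a :: t)) qu andbT /=.
  have := Cross _ _ pin lX => /disP h; apply/hasPn => v vq; apply/negP => vp; exact: h v vp vq.
- rewrite pairwise_map; apply: (sub_in_pairwise (P:=mem ps1') _ _ p1'); last by apply/allP.
  move=> p p' pin p'in dpp' /=.
  have [uX up] := lastX1 p pin; have [u'X u'p] := lastX1 p' p'in.
  move/disP: (dpp') => D.
  have uu' : last x p != last x p'.
    by apply/eqP => e; apply: (D (last x p)) => //; rewrite e.
  apply/disP => v; rewrite !mem_cat => /orP [vp|vq] /orP [vp'|vq'].
  + exact: D vp vp'.
  + exact: (elimT (disP _ _) (Cross _ _ pin u'X)) v vp vq'.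
  + exact: (elimT (disP _ _) (Cross _ _ p'in uX)) v vp' vq.
  + have [_ _ _ s1q] := Qpath _ uX; have [_ _ _ s2q] := Qpath _ u'X.
    have [qi hi] := qselP _ (sigX _ uX); have [qi' hi'] := qselP _ (sigX _ u'X).
    have ne : qsel (sig (last x p)) != qsel (sig (last x p')).
      apply/eqP => e; have := siginj _ _ uX u'X uu'; by rewrite -hi -hi' e eqxx.
    have := pairwise_dis_mem p2' qi qi' ne => /disP h.
    exact: h v (s1q _ vq) (s2q _ vq').
Qed.

Lemma menger n : forall E, #|E| <= n -> simple_graph E -> forall A B k,
  (forall S, sep E A B S -> k <= #|S|) -> exists ps, linkage E A B k ps.
Proof.
elim: n => [|n IHn] E hE sE A B k hk.
  have E0 : E = set0 by apply/eqP; rewrite -cards_eq0 -leqn0.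
  by subst; exact: base_case.
case: (set_0Vmem E) => [E0|[e eE]]; first by subst; exact: base_case.
have IH : forall E', #|E'| < #|E| -> simple_graph E' -> forall A B k,
    (forall S, sep E' A B S -> k <= #|S|) -> exists ps, linkage E' A B k ps.
  by move=> E' lt; apply: IHn; rewrite -ltnS; exact: leq_trans lt hE.
have /cards2P [x [y [xy ee]]] : #|e| == 2 by rewrite sE.
subst e.
have sE' : simple_graph (E :\ [set x; y]) by move=> f; rewrite in_setD1 => /andP [_ /sE].
have ltE : #|E :\ [set x; y]| < #|E| by rewrite (cardsD1 [set x; y] E) eE.
case: (boolP [exists S : {set T}, sep (E :\ [set x; y]) A B S && (#|S| < k)]) =>
    [/existsP [Y /andP [sY Yk]]|nex].
  have : ~~ sep E A B Y by apply/negP => sepY; have := hk _ sepY; rewrite leqNgt Yk.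
  case/sep_neg => a0 [b0 [aA0 bB0 aY0 bY0 c]].
  have [c1|[[c1 c2]|[c1 c2]]] := decomp x y sE c.
  - by case: (sep_use sY aA0 bB0 aY0 bY0 c1).
  - have xY := cavoid_notin c1 aY0.
    have yY : y \notin Y by rewrite cavoid_sym in c2; exact: cavoid_notin c2 bY0.
    exact: (menger_step IH sE eE xy hk sY Yk aA0 bB0 aY0 bY0 xY yY c1 c2).
  - have yY := cavoid_notin c1 aY0.
    have xY : x \notin Y by rewrite cavoid_sym in c2; exact: cavoid_notin c2 bY0.
    rewrite (setUC [set x] [set y]) in eE sY c1 c2.
    have yx : y != x by rewrite eq_sym.
    exact: (menger_step IH sE eE yx hk sY Yk aA0 bB0 aY0 bY0 yY xY c1 c2).
have hk' : forall S, sep (E :\ [set x; y]) A B S -> k <= #|S|.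
  move=> S sS; rewrite leqNgt; apply/negP => lt; apply: (negP nex).
  by apply/existsP; exists S; rewrite sS lt.
have [ps L] := IH _ ltE sE' A B k hk'.
by exists ps; apply: (linkage_sub (subD1set E _) L).
Qed.

Lemma simple_nloop F u : simple_graph F -> ~~ adj F u u.
Proof. by move=> sF; apply/negP => /sF; rewrite cards2 eqxx. Qed.

Lemma local F x y m : simple_graph F -> x != y -> ~~ adj F x y ->
  (forall S : {set T}, #|S| < m -> x \notin S -> y \notin S -> connect (avoid F S) x y) ->
  exists rs : seq (seq T), [/\ size rs = m, pairwise dis rs &
    forall r, r \in rs -> r != [::] /\ is_path F x y (rcons r y)].
Proof.
move=> sF xy nxy hc.
pose F' := [set e in F | (x \notin e) && (y \notin e)].
pose A := [set v | adj F x v]; pose B := [set v | adj F y v].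
have sF' : simple_graph F' by move=> e; rewrite inE => /andP [/sF].
have adj1 : forall u v, adj F' u v -> [&& adj F u v, u != x, u != y, v != x & v != y].
  move=> u v; rewrite /adj inE !in_set2 !negb_or => /and3P [-> /andP [a1 a2] /andP [a3 a4]].
  by rewrite !(eq_sym u) !(eq_sym v) a1 a2 a3 a4.
have adj2 : forall u v, adj F u v -> u != x -> u != y -> v != x -> v != y -> adj F' u v.
  move=> u v; rewrite /adj inE !in_set2 !negb_or => -> a1 a2 a3 a4.
  by rewrite !(eq_sym x) !(eq_sym y) a1 a2 a3 a4.
have hk : forall S, sep F' A B S -> m <= #|S|.
  move=> S sS; rewrite leqNgt; apply/negP => lt.
  pose S' := S :\: [set x; y].
  have lt' : #|S'| < m by apply: leq_ltn_trans lt; apply: subset_leq_card; apply: subsetDl.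
  have xS' : x \notin S' by rewrite inE in_set2 eqxx.
  have yS' : y \notin S' by rewrite inE in_set2 eqxx orbT.
  have := hc S' lt' xS' yS'; case/connectP=> p pp ly.
  move: ly; case/shortenP: pp => p' pp' up' _ ly.
  case: p' pp' up' ly => [|v1 q] /=; first by move=> _ _ e; rewrite e eqxx in xy.
  case/andP=> av1 pq.
  case/lastP: q pq => [|q0 l] pq.
    by move=> _ /= e; subst v1; case/and3P: av1 => a _ _; rewrite a in nxy.
  rewrite last_rcons => up' ely; subst l.
  move: pq; rewrite rcons_path => /andP [pq0 alq].
  have : uniq (rcons (x :: v1 :: q0) y) by exact: up'.
  rewrite rcons_uniq => /andP [yn /andP [xn _]].
  have alP : all [pred w | (w != x) && (w != y)] (v1 :: q0).
    apply/allP => w win /=; apply/andP; split; apply/negP => /eqP ew; subst w.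
      by rewrite win in xn.
    by rewrite inE win orbT in yn.
  have notS : forall w, w \in v1 :: q0 -> w \notin S' -> w \notin S.
    move=> w win; have := allP alP w win => /andP [wx wy].
    by rewrite inE in_set2 (negPf wx) (negPf wy).
  have pR : path (avoid F' S) v1 q0.
    apply: (sub_in_path _ alP pq0) => u w /andP [ux uy] /andP [wx wy] /and3P [auw uS wS].
    apply/and3P; split; first exact: adj2.
    - by move: uS; rewrite inE in_set2 (negPf ux) (negPf uy).
    - by move: wS; rewrite inE in_set2 (negPf wx) (negPf wy).
  case/and3P: av1 => axv1 _ v1S; case/and3P: alq => alq blS _.
  apply: (sep_use sS (a := v1) (b := last v1 q0)).
  - by rewrite inE.
  - by rewrite inE adj_sym.
  - by apply: notS => //; rewrite inE eqxx.
  - by apply: notS => //; exact: mem_last.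
  - by apply/connectP; exists q0.
have [ps [sz al pw]] := menger (leqnn #|F'|) sF' hk.
exists ps; split => // r rin.
have := allP al r rin; case: r rin => [|a t] rin //= /and4P [pt aA lB un].
have nxyv : forall w, w \in a :: t -> (w != x) && (w != y).
  move=> w; rewrite inE => /orP [/eqP ->|].
    move: aA; rewrite inE => ax; apply/andP; split.
      by apply/negP => /eqP e; subst a; rewrite (negPf (simple_nloop x sF)) in ax.
    by apply/negP => /eqP e; subst a; rewrite ax in nxy.
  elim: t a pt {aA lB un rin} => [|b t IH] a //= /andP [ab pt].
  rewrite inE => /orP [/eqP ->|wt]; last exact: IH pt wt.
  by case/and5P: (adj1 _ _ ab) => _ _ _ -> ->.
split => //; split.
- rewrite /= rcons_path; apply/and3P; split.
  + by move: aA; rewrite inE.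
  + by apply: sub_path pt => u v /adj1 /andP [].
  + by move: lB; rewrite inE adj_sym.
- by rewrite /= last_rcons.
- change (uniq (rcons (x :: a :: t) y)); rewrite rcons_uniq.
  have nx := nxyv x; have ny := nxyv y.
  apply/andP; split.
    rewrite in_cons negb_or eq_sym xy /=; apply/negP => h.
    by move: (ny h); rewrite eqxx andbF.
  rewrite /= un andbT; apply/negP => h.
  by move: (nx h); rewrite eqxx.
Qed.

Lemma path_true (e : rel T) x p : (forall u v, e u v) -> path e x p.
Proof. by move=> h; elim: p x => [|a p IH] x //=; rewrite h IH. Qed.

Lemma uniq_dis (rs : seq (seq T)) : pairwise dis rs -> all (fun r => r != [::]) rs -> uniq rs.
Proof.
elim: rs => [|r rs IH] //= /andP [/allP dr pw] /andP [rn an].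
rewrite IH // andbT; apply/negP => rin.
have /disP h := dr r rin; case: r rn {dr rin h} (h) => [|a r] // _ h.
by apply: (h a); rewrite inE eqxx.
Qed.

Lemma disj_map x y (rs : seq (seq T)) : pairwise dis rs -> forall i j, i < j < size rs ->
  [disjoint behead (internal x (nth [::] (map (rcons^~ y) rs) i))
           & behead (internal x (nth [::] (map (rcons^~ y) rs) j))].
Proof.
move=> pw i j /andP [ij js]; have iS : i < size rs by apply: ltn_trans ij js.
rewrite !(nth_map [::]) // /internal !belast_rcons /=.
move/(pairwiseP [::]): pw => h; exact: (h i j iS js ij).
Qed.

Lemma is_path_sub F F' x y p : F' \subset F -> is_path F' x y p -> is_path F x y p.
Proof.
move=> sub [pp lp up]; split => //; apply: sub_path pp => u v; rewrite /adj => h.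
exact: (subsetP sub).
Qed.

Lemma whitney F k x y : simple_graph F -> kconnected k F -> 0 < k -> x != y ->
  k_mono_paths k F (fun _ => 0) x y.
Proof.
move=> sF [kT hc] k0 xy.
have mono : forall p, monochromatic (fun _ => 0) x p by move=> p; exists 0; apply: path_true.
case: (boolP (adj F x y)) => axy.
  pose F'' := F :\ [set x; y].
  have sF'' : simple_graph F'' by move=> f; rewrite in_setD1 => /andP [_ /sF].
  have nxy'' : ~~ adj F'' x y by rewrite /adj in_setD1 eqxx.
  have hc'' : forall S : {set T}, #|S| < k.-1 -> x \notin S -> y \notin S -> connect (avoid F'' S) x y.
    move=> S lt xS yS.
    have : 0 < #|~: (S :|: [set x; y])|.
      have h1 := cardsC (S :|: [set x; y]).
      have h2 := leq_of_leqif (leq_card_setU S [set x; y]).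
      rewrite cards2 xy in h2; lia.
    rewrite card_gt0 => /set0Pn [z]; rewrite in_setC in_setU in_set2 !negb_or => /andP [zS /andP [zx zy]].
    have lift : forall w, w \in [set x; y] -> subrel (avoid F (w |: S)) (connect (avoid F'' S)).
      move=> w wxy u v /and3P [auv uS vS]; apply: connect1; apply/and3P; split.
      - rewrite /adj in_setD1; apply/andP; split => //; apply/negP => /eqP e.
        have : w \in [set u; v] by rewrite e.
        rewrite in_set2 => /orP [/eqP wu|/eqP wv]; subst w.
          by rewrite setU11 in uS.
        by rewrite setU11 in vS.
      - by move: uS; rewrite in_setU1 negb_or => /andP [].
      - by move: vS; rewrite in_setU1 negb_or => /andP [].
    have c1 : connect (avoid F (x |: S)) z y.
      apply: hc; first by rewrite cardsU1 xS; lia.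
        by rewrite in_setU1 negb_or zx zS.
      by rewrite in_setU1 negb_or eq_sym xy yS.
    have c2 : connect (avoid F (y |: S)) z x.
      apply: hc; first by rewrite cardsU1 yS; lia.
        by rewrite in_setU1 negb_or zy zS.
      by rewrite in_setU1 negb_or xy xS.
    have c1' := connect_sub (lift x (setU11 x [set y])) c1.
    have c2' : connect (avoid F'' S) z x.
      by apply: connect_sub c2; apply: lift; rewrite in_set2 eqxx orbT.
    by apply: (@connect_trans _ _ z) => //; rewrite cavoid_sym.
  have [rs [sz pw hr]] := local sF'' xy nxy'' hc''.
  exists ([:: y] :: map (rcons^~ y) rs); split.
  - by rewrite /= size_map sz prednK.
  - rewrite /= map_inj_uniq; last exact: rcons_injl.
    apply/andP; split.
      apply/mapP => -[r rin e]; have [rn _] := hr r rin.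
      by move: e; case: r {rin} rn => [|a [|b r']] //.
    apply: (uniq_dis pw); apply/allP => r rin; by have [] := hr r rin.
  - move=> p; rewrite inE => /orP [/eqP ->|/mapP [r rin ->]].
      split => //; split => //=; first by rewrite axy.
      by rewrite inE andbT.
    split => //; have [_ ip] := hr r rin; apply: (is_path_sub _ ip).
    exact: subD1set.
  - move=> [|i] [|j] //=.
      by move=> _; rewrite disjoint_has.
    rewrite !ltnS size_map => ij; exact: disj_map.
have hc' : forall S : {set T}, #|S| < k -> x \notin S -> y \notin S -> connect (avoid F S) x y.
  by move=> S lt xS yS; apply: hc => //; lia.
have [rs [sz pw hr]] := local sF xy axy hc'.
exists (map (rcons^~ y) rs); split.
- by rewrite size_map sz.
- rewrite map_inj_uniq; last exact: rcons_injl.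
  apply: (uniq_dis pw); apply/allP => r rin; by have [] := hr r rin.
- move=> _ /mapP [r rin ->]; split => //; by have [] := hr r rin.
- rewrite size_map; exact: disj_map.
Qed.

Lemma max_witness N (P : pred 'I_N) i1 : P i1 ->
  exists2 i0 : 'I_N, P i0 & \max_(n < N | P n) n = i0.
Proof.
move=> P1.
have h : 0 < #|[pred n : 'I_N | P n]| by apply/card_gt0P; exists i1.
have [i0 Pi0 e] := eq_bigmax_cond (fun n : 'I_N => nat_of_ord n) h.
by exists i0.
Qed.

Lemma F_nonempty k F : kconnected k F -> 0 < k -> 0 < #|F|.
Proof.
move=> [kT hc] k0.
have : 1 < #|T| by lia.
case/card_gt1P => x [y [_ _ xy]].
have n0 : forall v : T, v \notin (set0 : {set T}) by move=> v; rewrite in_set0.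
have := hc set0; rewrite cards0 => /(_ isT x y (n0 x) (n0 y)).
case/connectP => [[|w p]] /=; first by move=> _ e; rewrite e eqxx in xy.
case/andP => /and3P [a _ _] _ _; apply/card_gt0P; by exists [set x; w].
Qed.

Lemma mc_witness F k : 0 < k -> simple_graph F -> kconnected k F ->
  1 <= mc k F /\ exists c, mono_kconn_colouring k F c /\ ncolours F c = mc k F.
Proof.
move=> k0 sF kF.
have Fn := F_nonempty kF k0.
have m0 : mono_kconn_colouring k F (fun _ => 0) by move=> x y xy; apply: whitney.
have n0 : ncolours F (fun _ => 0) = 1.
  rewrite /ncolours; move: Fn; rewrite cardE.
  case: (enum F) => [|e s] // _.
  apply/eqP; rewrite eqn_leq; apply/andP; split.
    apply: (uniq_leq_size (s2 := [:: 0])) (undup_uniq _) _ => v.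
    by rewrite mem_undup => /mapP [_ _ ->]; rewrite inE.
  apply: (uniq_leq_size (s1 := [:: 0])) => // v; rewrite inE => /eqP ->.
  by rewrite mem_undup inE.
have o1 : 1 < #|F|.+1 by rewrite ltnS.
pose P := fun n : 'I_#|F|.+1 => `[< exists c, mono_kconn_colouring k F c /\ ncolours F c = n >].
have P1 : P (Ordinal o1) by apply/asboolP; exists (fun _ => 0).
split.
  have h := @leq_bigmax_cond _ P (fun n : 'I_#|F|.+1 => nat_of_ord n) (Ordinal o1) P1.
  rewrite /P /= in h; exact: h.
have [i0 Pi0 e] := max_witness P1.
rewrite /mc -/P e; move/asboolP: Pi0 => [c [mc nc]].
by exists c.
Qed.


Definition extc (E F : {set {set T}}) (cF : {set T} -> nat) : {set T} -> nat :=
  fun e => if e \in F then cF e else (\max_(f in F) cF f).+1 + index e (enum (E :\: F)).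

Lemma ncol_lb E F cF : F \subset E -> ncolours F cF + #|E :\: F| <= ncolours E (extc E F cF).
Proof.
move=> sub; set N := (\max_(f in F) cF f).+1.
set U1 := undup (map cF (enum F)); set U2 := map (extc E F cF) (enum (E :\: F)).
have U1lt : forall v, v \in U1 -> v < N.
  move=> v; rewrite mem_undup => /mapP [f fin ->]; rewrite ltnS.
  by apply: leq_bigmax_cond; rewrite mem_enum in fin.
have U2ge : forall v, v \in U2 -> N <= v.
  move=> v /mapP [f fin ->]; rewrite mem_enum inE in fin; case/andP: fin => fF _.
  by rewrite /extc (negPf fF) leq_addr.
have uU2 : uniq U2.
  rewrite map_inj_in_uniq ?enum_uniq // => f g fin gin.
  have fF : f \notin F by move: fin; rewrite mem_enum inE => /andP [].
  have gF : g \notin F by move: gin; rewrite mem_enum inE => /andP [].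
  rewrite /extc (negPf fF) (negPf gF) => /addnI e.
  by rewrite -(nth_index f fin) -(nth_index f gin) e.
have u : uniq (U1 ++ U2).
  rewrite cat_uniq undup_uniq uU2 andbT; apply/hasPn => v vU2; apply/negP => vU1.
  by have := leq_trans (U2ge v vU2) (U1lt v vU1); rewrite ltnn.
have sz : size (U1 ++ U2) = ncolours F cF + #|E :\: F| by rewrite size_cat size_map -cardE.
rewrite -sz /ncolours; apply: uniq_leq_size u _ => v; rewrite mem_cat mem_undup => /orP [].
  rewrite mem_undup => /mapP [f fin ->]; apply/mapP; exists f.
    by rewrite mem_enum; apply: (subsetP sub); rewrite mem_enum in fin.
  by rewrite /extc -mem_enum fin.
move=> /mapP [f fin ->]; apply/mapP; exists f => //.
by move: fin; rewrite !mem_enum inE => /andP [].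
Qed.

Lemma extc_mono E F cF k : F \subset E -> mono_kconn_colouring k F cF ->
  mono_kconn_colouring k E (extc E F cF).
Proof.
move=> sub hm x y xy; have [ps [sz up hp hd]] := hm x y xy.
exists ps; split => // p pin; have [ip [col mp]] := hp p pin; split.
  exact: is_path_sub sub ip.
exists col; case: ip => pp _ _.
have : path [rel u v | adj F u v && (cF [set u; v] == col)] x p by rewrite path_relI pp mp.
apply: sub_path => u v /andP [a c]; rewrite /= /extc; by move: a; rewrite /adj => ->.
Qed.

End Basic.

Theorem mainTheorem1 (T : finType) (E : {set {set T}}) (k : nat) :
  2 <= k -> simple_graph E -> kconnected k E ->
  forall H : {set {set T}}, min_spanning_kconn k E H ->
    nedges E - nedges H + hk k E <= mc k E /\
    nedges E - nedges H + 1 <= nedges E - nedges H + hk k E.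
Proof.
move=> k2 sE kE H [HE kH minH].
have k0 : 0 < k by lia.
have simp : forall F : {set {set T}}, F \subset E -> simple_graph F.
  by move=> F sub e eF; apply: sE; exact: (subsetP sub).
have PH : `[< min_spanning_kconn k E H >] by apply/asboolP.
have hk1 : 1 <= hk k E.
  have [h1 _] := mc_witness k0 (simp _ HE) kH.
  apply: leq_trans h1 _; rewrite /hk.
  exact: (@leq_bigmax_cond _ (fun F => `[< min_spanning_kconn k E F >]) (fun F => mc k F) H PH).
split; last by rewrite leq_add2l.
have hpos : 0 < #|[pred F : {set {set T}} | `[< min_spanning_kconn k E F >]]|.
  by apply/card_gt0P; exists H.
have [F PF e] := eq_bigmax_cond (fun F => mc k F) hpos.
move/asboolP: PF => [FE kF minF].
have eqF : #|F| = #|H| by apply/eqP; rewrite eqn_leq minF // minH.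
have [_ [cF [mF nF]]] := mc_witness k0 (simp _ FE) kF.
have eh : hk k E = mc k F by rewrite /hk e.
have lb := ncol_lb cF FE.
have mE := extc_mono FE mF.
have cle : ncolours E (extc E F cF) < #|E|.+1.
  rewrite ltnS cardE /ncolours; apply: leq_trans (size_undup _) _; by rewrite size_map.
have := @leq_bigmax_cond _ (fun n : 'I_#|E|.+1 => `[< exists c, mono_kconn_colouring k E c /\ ncolours E c = n >])
   (fun n => nat_of_ord n) (Ordinal cle).
have Pc : `[< exists c, mono_kconn_colouring k E c /\ ncolours E c = Ordinal cle >].
  by apply/asboolP; exists (extc E F cF).
move/(_ Pc) => /= hmax.
rewrite /mc; apply: leq_trans hmax.
have dF : #|E :\: F| = #|E| - #|F| by rewrite cardsD (setIidPr FE).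
rewrite /nedges eh -eqF -nF -dF addnC; exact: lb.
Qed.
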